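(* Let $\Psi=\Psi^++\Psi^-\in\Delta_8=\Delta_8^+\oplus\Delta_8^-$ be an $8$-dimensional spinor with $\Psi^+\neq0$ and $\Psi^-\neq0$. Then there exists a family, depending on $25$ real parameters, of pairs $(\mathrm{T},\mathrm{F})$ with $\mathrm{T}\in\Lambda^3(\mathbb{R}^8)$ and $\mathrm{F}\in\Lambda^4(\mathbb{R}^8)$ such that for every vector $X\in\mathbb{R}^8$ $$\tfrac14\,(X\lrcorner\mathrm{T})\cdot\Psi+\mathrm{F}\cdot X\cdot\Psi=0 .$$
   Context: $\mathbb{R}^8$ carries the Euclidean metric; $\Delta_8=\Delta_8^+\oplus\Delta_8^-$ is the real $16$-dimensional spin representation of $\mathrm{Spin}(8)$ split into its two half-spin representations; Clifford multiplication satisfies $X\cdot X=-|X|^2$, and $k$-forms act by Clifford multiplication ($e_{i_1}\wedge\cdots\wedge e_{i_k}\mapsto e_{i_1}\cdots e_{i_k}$ in an orthonormal basis, distinct indices). *)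

(* Defs.v *)
From HB Require Import structures.
From mathcomp Require Import all_boot all_order all_algebra.
From mathcomp Require Import reals.
Set Implicit Arguments. Unset Strict Implicit. Unset Printing Implicit Defensive.
Import Order.TTheory GRing.Theory Num.Theory.
Local Open Scope ring_scope.

Section Spin8.
Variable R : realType.

Definition vec8 := 'I_8 -> R.
(* coefficient functions of 2-, 3-, 4-forms: B = sum_{i<j} B i j e_i/\e_j etc. *)
Definition form2 := 'I_8 -> 'I_8 -> R.
Definition form3 := 'I_8 -> 'I_8 -> 'I_8 -> R.
Definition form4 := 'I_8 -> 'I_8 -> 'I_8 -> 'I_8 -> R.

Definition alternating3 (T : form3) : Prop :=
  forall i j k, T j i k = - T i j k /\ T i k j = - T i j k.
Definition alternating4 (F : form4) : Prop :=
  forall i j k l, [/\ F j i k l = - F i j k l, F i k j l = - F i j k l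
                    & F i j l k = - F i j k l].

(* Clifford multiplication by e_i on Delta_8 = R^16 (column vectors):
   g i g j + g j g i = -2 delta_ij, i.e. X.X = -|X|^2 *)
Definition is_clifford_rep (g : 'I_8 -> 'M[R]_16) : Prop :=
  forall i j : 'I_8, g i *m g j + g j *m g i = (if i == j then - 2 else 0)%:M.

(* volume element e_0 ... e_7; Delta_8^+/- are its (+1)/(-1)-eigenspaces *)
Definition cvol (g : 'I_8 -> 'M[R]_16) : 'M[R]_16 := \prod_(i < 8) g i.

Definition clif_vec (g : 'I_8 -> 'M[R]_16) (X : vec8) : 'M[R]_16 :=
  \sum_(i < 8) X i *: g i.
Definition clif2 (g : 'I_8 -> 'M[R]_16) (B : form2) : 'M[R]_16 :=
  \sum_(i < 8) \sum_(j < 8 | (i < j)%N) B i j *: (g i *m g j).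
Definition clif3 (g : 'I_8 -> 'M[R]_16) (T : form3) : 'M[R]_16 :=
  \sum_(i < 8) \sum_(j < 8 | (i < j)%N) \sum_(k < 8 | (j < k)%N)
     T i j k *: (g i *m g j *m g k).
Definition clif4 (g : 'I_8 -> 'M[R]_16) (F : form4) : 'M[R]_16 :=
  \sum_(i < 8) \sum_(j < 8 | (i < j)%N) \sum_(k < 8 | (j < k)%N)
     \sum_(l < 8 | (k < l)%N) F i j k l *: (g i *m g j *m g k *m g l).

Definition contract (X : vec8) (T : form3) : form2 :=
  fun j k => \sum_(i < 8) X i * T i j k.

Definition solves (g : 'I_8 -> 'M[R]_16) (Psi : 'cV[R]_16) (T : form3) (F : form4)
  : Prop :=
  forall X : vec8,
    (1 / 4 : R) *: (clif2 g (contract X T) *m Psi)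
      + clif4 g F *m (clif_vec g X *m Psi) = 0.

End Spin8.

(* Main.v *)
Require Import Defs.
From HB Require Import structures.
From mathcomp Require Import all_boot all_order all_algebra.
From mathcomp Require Import reals.
From mathcomp Require Import ring lra zify.
From Stdlib Require Import PeanoNat.
Set Implicit Arguments. Unset Strict Implicit. Unset Printing Implicit Defensive.
Import Order.TTheory GRing.Theory Num.Theory.
Local Open Scope ring_scope.

Fixpoint ins (n : nat) (s : seq nat) : bool * seq nat :=
  match s with
  | [::] => (false, [:: n])
  | m :: s' => if Nat.ltb n m then (false, n :: s)
               else if Nat.eqb n m then (true, s')
               else let p := ins n s' in (~~ p.1, m :: p.2)
  end.

Fixpoint nf (s : seq nat) : bool * seq nat :=
  match s with
  | [::] => (false, [::])
  | n :: s' => let p := nf s' in let q := ins n p.2 in (addb p.1 q.1, q.2)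
  end.

Definition lt8 (s : seq nat) := all (fun k => (k < 8)%N) s.
Definition sgb (b : bool) : int := if b then -1 else 1.

Definition mon := (int * seq nat)%type.
Definition term := (mon * seq nat)%type.
Definition prodz (s : seq int) : int := foldr (fun a b => a * b) 1 s.
Definition normT (vn : nat -> int * nat) (t : term) : term :=
  let p := nf t.2 in
  ((t.1.1 * sgb p.1 * prodz [seq (vn v).1 | v <- t.1.2],
    sort leq [seq (vn v).2 | v <- t.1.2]), p.2).
Definition key (t : term) := (t.1.2, t.2).
Definition coefK k (n : seq term) : int :=
  foldr (fun t acc => if key t == k then t.1.1 + acc else acc) 0 n.
Definition check vn (l1 l2 : seq term) : bool :=
  let n1 := map (normT vn) l1 in let n2 := map (normT vn) l2 in
  all (fun k => coefK k n1 == coefK k n2) (map key (n1 ++ n2)).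

Definition fmul (l1 l2 : seq term) : seq term :=
  [seq ((t1.1.1 * t2.1.1, t1.1.2 ++ t2.1.2), t1.2 ++ t2.2) | t1 <- l1, t2 <- l2].
Definition fscale (k : int) (l : seq term) : seq term :=
  [seq ((k * t.1.1, t.1.2), t.2) | t <- l].
Definition wok (l : seq term) := all (fun t => lt8 t.2) l.

Lemma ins_lt8 n s : (n < 8)%N -> lt8 s -> lt8 (ins n s).2.
Proof.
elim: s => [|m s IH] /= hn; first by rewrite andbT.
case/andP=> hm hs.
case: (Nat.ltb n m) => /=; first by rewrite hn hm hs.
case: (Nat.eqb n m) => //=.
by rewrite hm IH.
Qed.

Lemma nf_lt8 s : lt8 s -> lt8 (nf s).2.
Proof.
elim: s => [|n s IH] //= /andP [hn hs].
exact: ins_lt8 hn (IH hs).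
Qed.

Lemma prodzE (R : pzRingType) (s : seq int) : (prodz s)%:~R = \prod_(x <- s) (x%:~R : R).
Proof. by elim: s => [|a s IH]; rewrite ?big_nil ?big_cons //= intrM IH. Qed.

Section Engine.
Variable R : realType.
Variable g : 'I_8 -> 'M[R]_16.
Hypothesis hg : is_clifford_rep g.

Fixpoint W (s : seq nat) : 'M[R]_16 :=
  match s with [::] => 1%:M | n :: s' => g (inord n) *m W s' end.

Definition sg (b : bool) : R := (sgb b)%:~R.

Lemma gg i : g i *m g i = - 1%:M.
Proof.
have h := hg i i; rewrite eqxx in h.
apply/matrixP => a b; have := congr1 (fun M : 'M[R]_16 => M a b) h.
rewrite [in X in X -> _]mxE [(_ *m _) a b]mxE !mxE.
by case: (a == b); rewrite /= ?mulr1n ?mulr0n => E; lra.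
Qed.

Lemma gswap i j : i != j -> g i *m g j = - (g j *m g i).
Proof.
move=> nij; have h := hg i j; rewrite (negbTE nij) in h.
by apply/eqP; rewrite -addr_eq0 h; apply/eqP/matrixP => a b; rewrite !mxE mul0rn.
Qed.

Lemma sgN b : sg (~~ b) = - sg b.
Proof. by case: b; rewrite /sg /sgb /= ?opprK. Qed.

Lemma sg_add a b : sg (addb a b) = sg a * sg b.
Proof. by case: a; case: b; rewrite /sg /sgb /= ?mulrN ?mulNr ?mulr1 ?opprK. Qed.

Lemma insP n s : (n < 8)%N -> lt8 s ->
  g (inord n) *m W s = sg (ins n s).1 *: W (ins n s).2.
Proof.
elim: s => [|m s IH] /= hn; first by rewrite /sg scale1r.
case/andP=> hm hs.
case: (Nat.ltb n m) => /=; first by rewrite /sg scale1r.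
case E: (Nat.eqb n m) => /=.
  move/Nat.eqb_eq: E => ->.
  by rewrite mulmxA gg mulNmx mul1mx /sg scaleN1r.
have nij : (inord n : 'I_8) != inord m.
  apply/negP => /eqP /(congr1 val); rewrite /= !inordK // => nm.
  by move/Nat.eqb_neq: E; rewrite nm.
by rewrite mulmxA gswap // mulNmx -mulmxA IH // sgN scaleNr scalemxAr.
Qed.

Lemma nfP s : lt8 s -> W s = sg (nf s).1 *: W (nf s).2.
Proof.
elim: s => [|n s IH] /=; first by rewrite /sg scale1r.
case/andP => hn hs.
rewrite IH // -scalemxAr insP //; last exact: nf_lt8.
by rewrite scalerA sg_add.
Qed.

Lemma Wcat s t : W (s ++ t) = W s *m W t.
Proof. by elim: s => [|n s IH] /=; rewrite ?mul1mx // IH mulmxA. Qed.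

Definition interp (env : nat -> R) (m : mon) : R := m.1%:~R * \prod_(v <- m.2) env v.
Definition evalF env (l : seq term) : 'M[R]_16 := \sum_(t <- l) interp env t.1 *: W t.2.

Lemma normT_ok env vn (henv : forall v, env v = (vn v).1%:~R * env (vn v).2) t :
  lt8 t.2 -> interp env (normT vn t).1 *: W (normT vn t).2 = interp env t.1 *: W t.2.
Proof.
case: t => [[c vs] w] /= hw.
rewrite [W w](nfP hw) scalerA; congr (_ *: _).
rewrite /interp /= (perm_big _ (permEl (perm_sort leq _))) /= big_map.
rewrite [in RHS](eq_bigr _ (fun v _ => henv v)) big_split /=.
by rewrite !intrM prodzE big_map /sg; ring.
Qed.

Definition Mk env (k : seq nat * seq nat) : 'M[R]_16 := (\prod_(v <- k.1) env v) *: W k.2.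

Lemma group env (n : seq term) K : uniq K -> all (fun t => key t \in K) n ->
  \sum_(t <- n) interp env t.1 *: W t.2 = \sum_(k <- K) (coefK k n)%:~R *: Mk env k.
Proof.
move=> hK; elim: n => [|t n IH] /=.
  by move=> _; rewrite big_nil big1 // => k _; rewrite scale0r.
case/andP => ht hn; rewrite big_cons IH //.
have -> : \sum_(k <- K) (coefK k (t :: n))%:~R *: Mk env k =
   \sum_(k <- K) ((if key t == k then t.1.1 else 0)%:~R *: Mk env k
                  + (coefK k n)%:~R *: Mk env k).
  apply: eq_bigr => k _ /=; case: ifP => _; first by rewrite intrD scalerDl.
  by rewrite scale0r add0r.
rewrite big_split /=; congr (_ + _).
rewrite (bigD1_seq (key t)) //= eqxx big1 ?addr0; last first.
  by move=> k /negbTE; rewrite eq_sym => ->; rewrite scale0r.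
by rewrite /Mk /interp scalerA.
Qed.

Lemma checkP env vn l1 l2 : (forall v, env v = (vn v).1%:~R * env (vn v).2) ->
  wok l1 -> wok l2 -> check vn l1 l2 -> evalF env l1 = evalF env l2.
Proof.
move=> henv h1 h2 hc.
have E l : wok l -> evalF env l = \sum_(t <- map (normT vn) l) interp env t.1 *: W t.2.
  move=> hl; rewrite big_map /evalF; apply: eq_big_seq => t /(allP hl) ht.
  by rewrite normT_ok.
rewrite (E _ h1) (E _ h2).
move: hc; rewrite /check.
set n1 := map _ l1; set n2 := map _ l2 => hc.
have hs n : {subset n <= n1 ++ n2} -> all (fun t => key t \in undup (map key (n1 ++ n2))) n.
  by move=> sub; apply/allP => t tn; rewrite mem_undup map_f // sub.
rewrite (@group _ _ (undup (map key (n1 ++ n2)))) ?undup_uniq //; last first.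
  by apply: hs => t; rewrite mem_cat => ->.
rewrite (@group _ _ (undup (map key (n1 ++ n2)))) ?undup_uniq //; last first.
  by apply: hs => t; rewrite mem_cat => ->; rewrite orbT.
apply: eq_big_seq => k; rewrite mem_undup => hk.
by move/allP: hc => /(_ k hk) /eqP ->.
Qed.

Lemma evalF_cat env l1 l2 : evalF env (l1 ++ l2) = evalF env l1 + evalF env l2.
Proof. by rewrite /evalF big_cat. Qed.

Lemma evalF_scale env k l : evalF env (fscale k l) = k%:~R *: evalF env l.
Proof.
rewrite /evalF big_map scaler_sumr; apply: eq_bigr => t _.
by rewrite /interp /= intrM scalerA mulrA.
Qed.

Lemma evalF_mul env l1 l2 : evalF env l1 *m evalF env l2 = evalF env (fmul l1 l2).
Proof.
rewrite /evalF /fmul big_allpairs_dep mulmx_suml; apply: eq_bigr => t1 _.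
rewrite mulmx_sumr; apply: eq_bigr => t2 _.
rewrite -scalemxAl -scalemxAr scalerA Wcat /interp /= big_cat /= intrM.
by congr (_ *: _); ring.
Qed.

End Engine.

Definition ords : seq 'I_8 :=
  [:: @Ordinal 8 0 isT; @Ordinal 8 1 isT; @Ordinal 8 2 isT; @Ordinal 8 3 isT;
      @Ordinal 8 4 isT; @Ordinal 8 5 isT; @Ordinal 8 6 isT; @Ordinal 8 7 isT].

Lemma ords_perm : perm_eq ords (enum 'I_8).
Proof.
apply: uniq_perm; [by [] | exact: enum_uniq | move=> i].
rewrite mem_enum; case: i => [[|[|[|[|[|[|[|[|//]]]]]]]] hi] //.
Qed.
Definition Q2o : seq ('I_8 * 'I_8) :=
  [seq (i, j) | i : 'I_8 <- ords, j <- [seq j : 'I_8 <- ords | (i < j)%N]].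
Definition Q3o : seq ('I_8 * 'I_8 * 'I_8) :=
  [seq (p, k) | p : 'I_8 * 'I_8 <- Q2o, k <- [seq k : 'I_8 <- ords | (p.2 < k)%N]].
Definition Q4o : seq ('I_8 * 'I_8 * 'I_8 * 'I_8) :=
  [seq (q, l) | q : 'I_8 * 'I_8 * 'I_8 <- Q3o, l <- [seq l : 'I_8 <- ords | (q.2 < l)%N]].

Lemma sum_ord (V : nmodType) (F : 'I_8 -> V) : \sum_(i < 8) F i = \sum_(i <- ords) F i.
Proof. by rewrite (perm_big _ ords_perm) big_enum. Qed.

Lemma sum_ordc (V : nmodType) (P : pred 'I_8) (F : 'I_8 -> V) :
  \sum_(i < 8 | P i) F i = \sum_(i <- [seq i <- ords | P i]) F i.
Proof. by rewrite big_filter (perm_big _ ords_perm) big_enum_cond. Qed.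

Section Links.
Variable R : realType.
Variable g : 'I_8 -> 'M[R]_16.

Lemma W1 (i : 'I_8) : W g [:: val i] = g i.
Proof. by rewrite /= inord_val mulmx1. Qed.

Lemma E1 X : clif_vec g X = \sum_(i <- ords) X i *: W g [:: val i].
Proof. by rewrite /clif_vec sum_ord; apply: eq_bigr => i _; rewrite W1. Qed.

Lemma E2 B : clif2 g B = \sum_(p <- Q2o) B p.1 p.2 *: W g [:: val p.1; val p.2].
Proof.
rewrite /clif2 /Q2o big_allpairs_dep sum_ord; apply: eq_bigr => i _.
rewrite sum_ordc; apply: eq_bigr => j _.
by rewrite /= !inord_val mulmx1.
Qed.

Lemma E3 T : clif3 g T = \sum_(p <- Q3o) T p.1.1 p.1.2 p.2 *: W g [:: val p.1.1; val p.1.2; val p.2].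
Proof.
rewrite /clif3 /Q3o big_allpairs_dep /Q2o big_allpairs_dep sum_ord; apply: eq_bigr => i _.
rewrite sum_ordc; apply: eq_bigr => j _.
rewrite sum_ordc; apply: eq_bigr => k _.
by rewrite /= !inord_val mulmx1 !mulmxA.
Qed.

Lemma E4 F : clif4 g F = \sum_(p <- Q4o) F p.1.1.1 p.1.1.2 p.1.2 p.2
   *: W g [:: val p.1.1.1; val p.1.1.2; val p.1.2; val p.2].
Proof.
rewrite /clif4 /Q4o big_allpairs_dep /Q3o big_allpairs_dep /Q2o big_allpairs_dep sum_ord.
apply: eq_bigr => i _.
rewrite sum_ordc; apply: eq_bigr => j _.
rewrite sum_ordc; apply: eq_bigr => k _.
rewrite sum_ordc; apply: eq_bigr => l _.
by rewrite /= !inord_val mulmx1 !mulmxA.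
Qed.

Lemma Evol : cvol g = W g (iota 0 8).
Proof.
rewrite /cvol !big_ord_recl big_ord0 /= mulmx1 -!mulmxE.
do 7 (apply: (congr2 (@mulmx _ 16 16 16)); first by congr g; apply/val_inj; rewrite /= inordK).
by rewrite mulmxE mulr1; congr g; apply/val_inj; rewrite /= inordK.
Qed.

Lemma link1 env (ms : 'I_8 -> seq mon) X :
  (forall i, X i = \sum_(x <- ms i) interp env x) ->
  clif_vec g X = evalF g env [seq (x, [:: val i]) | i <- ords, x <- ms i].
Proof.
move=> h; rewrite E1 /evalF [in RHS]big_allpairs_dep; apply: eq_bigr => i _.
by rewrite h scaler_suml.
Qed.

Lemma link2 env (ms : 'I_8 * 'I_8 -> seq mon) B :
  (forall p : 'I_8 * 'I_8, p \in Q2o -> B p.1 p.2 = \sum_(x <- ms p) interp env x) ->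
  clif2 g B = evalF g env [seq (x, [:: val p.1; val p.2]) | p <- Q2o, x <- ms p].
Proof.
move=> h; rewrite E2 /evalF [in RHS]big_allpairs_dep; apply: eq_big_seq => p hp.
by rewrite h // scaler_suml.
Qed.

Lemma link3 env (ms : 'I_8 * 'I_8 * 'I_8 -> seq mon) T :
  (forall p : 'I_8 * 'I_8 * 'I_8, p \in Q3o -> T p.1.1 p.1.2 p.2 = \sum_(x <- ms p) interp env x) ->
  clif3 g T = evalF g env [seq (x, [:: val p.1.1; val p.1.2; val p.2]) | p <- Q3o, x <- ms p].
Proof.
move=> h; rewrite E3 /evalF [in RHS]big_allpairs_dep; apply: eq_big_seq => p hp.
by rewrite h // scaler_suml.
Qed.

Lemma link4 env (ms : 'I_8 * 'I_8 * 'I_8 * 'I_8 -> seq mon) F :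
  (forall p : 'I_8 * 'I_8 * 'I_8 * 'I_8, p \in Q4o -> F p.1.1.1 p.1.1.2 p.1.2 p.2 = \sum_(x <- ms p) interp env x) ->
  clif4 g F = evalF g env [seq (x, [:: val p.1.1.1; val p.1.1.2; val p.1.2; val p.2])
                          | p <- Q4o, x <- ms p].
Proof.
move=> h; rewrite E4 /evalF [in RHS]big_allpairs_dep; apply: eq_big_seq => p hp.
by rewrite h // scaler_suml.
Qed.

Lemma linkvol env : cvol g = evalF g env [:: ((1, [::]), iota 0 8)].
Proof. by rewrite Evol /evalF big_cons big_nil addr0 /interp big_nil mulr1 scale1r. Qed.

End Links.

Definition tc (i j k : nat) : nat := 16 + (64 * i + 8 * j + k).
Definition gc (i j k l : nat) : nat := 1000 + (512 * i + 64 * j + 8 * k + l).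

Definition envC (R : realType) (X Y : vec8 R) (T : form3 R) (G : form4 R) (v : nat) : R :=
  if (v < 8)%N then X (inord v) else if (v < 16)%N then Y (inord (v - 8)) else
  if (v < 528)%N then T (inord ((v - 16) %/ 64)) (inord ((v - 16) %/ 8 %% 8)) (inord ((v - 16) %% 8))
  else if (v < 1000)%N then 0 else
  G (inord ((v - 1000) %/ 512 %% 8)) (inord ((v - 1000) %/ 64 %% 8))
    (inord ((v - 1000) %/ 8 %% 8)) (inord ((v - 1000) %% 8)).

Definition sort3 (i j k : nat) : int * (nat * nat * nat) :=
  if (i == j) || (j == k) || (i == k) then (0, (i, j, k)) else
  if (i < j)%N then (if (j < k)%N then (1, (i, j, k)) else if (i < k)%N then (-1, (i, k, j)) else (1, (k, i, j)))
  else (if (i < k)%N then (-1, (j, i, k)) else if (j < k)%N then (1, (j, k, i)) else (-1, (k, j, i))).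

Definition vnT (v : nat) : int * nat :=
  if (16 <= v)%N && (v < 528)%N then
    let s := sort3 ((v - 16) %/ 64) ((v - 16) %/ 8 %% 8) ((v - 16) %% 8) in
    (s.1, tc s.2.1.1 s.2.1.2 s.2.2)
  else (1, v).

Lemma envX R X Y T G (i : 'I_8) : @envC R X Y T G (val i) = X i.
Proof. by rewrite /envC ltn_ord inord_val. Qed.

Lemma envY R X Y T G (i : 'I_8) : @envC R X Y T G (8 + val i) = Y i.
Proof.
rewrite /envC ltnNge leq_addr /= ltn_add2l ltn_ord.
by rewrite addKn inord_val.
Qed.

Lemma envT R X Y T G (i j k : nat) : (i < 8)%N -> (j < 8)%N -> (k < 8)%N ->
  @envC R X Y T G (tc i j k) = T (inord i) (inord j) (inord k).
Proof.
move=> hi hj hk; rewrite /envC /tc.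
have -> : (16 + (64 * i + 8 * j + k) < 8)%N = false by lia.
have -> : (16 + (64 * i + 8 * j + k) < 16)%N = false by lia.
have -> : (16 + (64 * i + 8 * j + k) < 528)%N = true by lia.
rewrite addKn.
have -> : ((64 * i + 8 * j + k) %/ 64 = i)%N by lia.
have -> : ((64 * i + 8 * j + k) %/ 8 %% 8 = j)%N by lia.
have -> : ((64 * i + 8 * j + k) %% 8 = k)%N by lia.
by [].
Qed.

Definition vid (v : nat) : int * nat := (1, v).

Lemma henv_id (R : realType) (env : nat -> R) v : env v = (vid v).1%:~R * env (vid v).2.
Proof. by rewrite /= mul1r. Qed.

Lemma interp1 (R : realType) (env : nat -> R) v : interp env (1, [:: v]) = env v.
Proof. by rewrite /interp big_cons big_nil /= mul1r mulr1. Qed.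

Lemma sum1 (R : realType) (env : nat -> R) (x : mon) : \sum_(y <- [:: x]) interp env y = interp env x.
Proof. by rewrite big_cons big_nil addr0. Qed.

Lemma interp2 (R : realType) (env : nat -> R) c a b :
  interp env (c, [:: a; b]) = c%:~R * (env a * env b).
Proof. by rewrite /interp !big_cons big_nil /= mulr1. Qed.

Lemma envG R X Y T G (i j k l : nat) : (i < 8)%N -> (j < 8)%N -> (k < 8)%N -> (l < 8)%N ->
  @envC R X Y T G (gc i j k l) = G (inord i) (inord j) (inord k) (inord l).
Proof.
move=> hi hj hk hl; rewrite /envC /gc.
have -> : (1000 + (512 * i + 64 * j + 8 * k + l) < 8)%N = false by lia.
have -> : (1000 + (512 * i + 64 * j + 8 * k + l) < 16)%N = false by lia.
have -> : (1000 + (512 * i + 64 * j + 8 * k + l) < 528)%N = false by lia.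
have -> : (1000 + (512 * i + 64 * j + 8 * k + l) < 1000)%N = false by lia.
rewrite addKn.
have -> : ((512 * i + 64 * j + 8 * k + l) %/ 512 %% 8 = i)%N by lia.
have -> : ((512 * i + 64 * j + 8 * k + l) %/ 64 %% 8 = j)%N by lia.
have -> : ((512 * i + 64 * j + 8 * k + l) %/ 8 %% 8 = k)%N by lia.
have -> : ((512 * i + 64 * j + 8 * k + l) %% 8 = l)%N by lia.
by [].
Qed.

Lemma sort3_lt i j k : (i < 8)%N -> (j < 8)%N -> (k < 8)%N ->
  [/\ ((sort3 i j k).2.1.1 < 8)%N, ((sort3 i j k).2.1.2 < 8)%N & ((sort3 i j k).2.2 < 8)%N].
Proof. by move=> hi hj hk; rewrite /sort3; repeat case: ifP => _ //=. Qed.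

Lemma alt_sort3 (R : realType) (T : form3 R) : alternating3 T ->
  forall i j k, (i < 8)%N -> (j < 8)%N -> (k < 8)%N ->
  T (inord i) (inord j) (inord k) = (sort3 i j k).1%:~R *
    T (inord (sort3 i j k).2.1.1) (inord (sort3 i j k).2.1.2) (inord (sort3 i j k).2.2).
Proof.
move=> hT i j k hi hj hk.
have A1 a b c : T b a c = - T a b c by case: (hT a b c).
have A2 a b c : T a c b = - T a b c by case: (hT a b c).
have A3 a b c : T c b a = - T a b c by rewrite A1 A2 A1 opprK.
have C1 a b c : T b c a = T a b c by rewrite A2 A1 opprK.
have C2 a b c : T c a b = T a b c by rewrite A1 A2 opprK.
have Z1 a c : T a a c = 0 by have := A1 a a c; lra.
have Z2 a c : T a c c = 0 by have := A2 a c c; lra.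
have Z3 a c : T a c a = 0 by rewrite -C1 Z2.
rewrite /sort3.
case: (eqVneq i j) => [->|nij] /=; first by rewrite Z1 mul0r.
case: (eqVneq j k) => [->|njk] /=; first by rewrite Z2 mul0r.
case: (eqVneq i k) => [->|nik] /=; first by rewrite Z3 mul0r.
have [hij|hij] := ltnP i j.
  have [hjk|hjk] := ltnP j k; first by rewrite mul1r.
  have [hik|hik] := ltnP i k.
    by rewrite (A2 (inord i) (inord j) (inord k)) mulN1r opprK.
  by rewrite (C2 (inord i) (inord j) (inord k)) mul1r.
have [hik|hik] := ltnP i k.
  by rewrite (A1 (inord i) (inord j) (inord k)) mulN1r opprK.
have [hjk|hjk] := ltnP j k.
  by rewrite (C1 (inord i) (inord j) (inord k)) mul1r.
by rewrite (A3 (inord i) (inord j) (inord k)) mulN1r opprK.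
Qed.

Lemma henvT (R : realType) X Y (T : form3 R) G : alternating3 T ->
  forall v, envC X Y T G v = (vnT v).1%:~R * envC X Y T G (vnT v).2.
Proof.
move=> hT v; rewrite /vnT; case: ifP => [/andP [h1 h2]|_]; last by rewrite mul1r.
have hi : ((v - 16) %/ 64 < 8)%N by lia.
have hj : ((v - 16) %/ 8 %% 8 < 8)%N by lia.
have hk : ((v - 16) %% 8 < 8)%N by lia.
have [s1 s2 s3] := sort3_lt hi hj hk.
rewrite /= envT //.
have -> : envC X Y T G v = T (inord ((v - 16) %/ 64)) (inord ((v - 16) %/ 8 %% 8)) (inord ((v - 16) %% 8)).
  rewrite /envC.
  have -> : (v < 8)%N = false by lia.
  have -> : (v < 16)%N = false by lia.
  by rewrite h2.
exact: alt_sort3.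
Qed.

Definition wedge (R : realType) (X : vec8 R) (T : form3 R) : form4 R :=
  fun i j k l => X i * T j k l - X j * T i k l + X k * T i j l - X l * T i j k.

Definition hsN (a b c d : nat) : int * seq nat :=
  let p := nf [:: a; b; c; d] in
  if size p.2 == 4 then
    let cm := [seq x <- iota 0 8 | x \notin p.2] in
    (sgb p.1 * sgb (nf (iota 0 8 ++ cm)).1, cm)
  else (0, [:: 0; 0; 0; 0]).

Definition hodge (R : realType) (G : form4 R) : form4 R :=
  fun i j k l => let h := hsN i j k l in
  h.1%:~R * G (inord (nth 0 h.2 0)) (inord (nth 0 h.2 1)) (inord (nth 0 h.2 2)) (inord (nth 0 h.2 3)).

Lemma hsN_lt a b c d : all (fun x => (x < 8)%N) (hsN a b c d).2.
Proof.
rewrite /hsN; case: ifP => _ //; set cm := filter _ _.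
apply/allP => x /= hx; move: hx; rewrite /cm mem_filter mem_iota.
by case/andP => _ /andP [_].
Qed.

Lemma nth_lt8 (s : seq nat) n : all (fun x => (x < 8)%N) s -> (nth 0 s n < 8)%N.
Proof.
move=> h; case: (ltnP n (size s)) => hn; first exact: (allP h) _ (mem_nth 0 hn).
by rewrite nth_default.
Qed.

Section Idents.
Variable R : realType.
Variable g : 'I_8 -> 'M[R]_16.
Hypothesis hg : is_clifford_rep g.

Lemma C1 X Y : clif_vec g X *m clif_vec g Y + clif_vec g Y *m clif_vec g X
  = (-2 * \sum_(i < 8) X i * Y i) *: 1%:M.
Proof.
pose env := envC X Y (fun _ _ _ => 0) (fun _ _ _ _ => 0).
have LX : clif_vec g X = evalF g env [seq (x, [:: val i]) | i <- ords, x <- [:: (1%:Z, [:: val i])]].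
  by apply: link1 => i; rewrite sum1 interp1 /env envX.
have LY : clif_vec g Y = evalF g env [seq (x, [:: val i]) | i <- ords, x <- [:: (1%:Z, [:: 8 + val i])]].
  by apply: link1 => i; rewrite sum1 interp1 /env envY.
have RH : (-2 * \sum_(i < 8) X i * Y i) *: 1%:M =
    evalF g env [seq ((-2, [:: val i; 8 + val i]), [::]) | i <- ords].
  rewrite /evalF big_map sum_ord mulr_sumr scaler_suml; apply: eq_bigr => i _.
  by rewrite /interp !big_cons big_nil /env envX envY /= mulr1.
rewrite LX LY RH !evalF_mul -evalF_cat.
apply: (checkP hg (vn := vid)).
- exact: henv_id.
- by vm_compute.
- by vm_compute.
- by vm_compute.
Qed.

Lemma LX X (Y : vec8 R) T G : clif_vec g X =
  evalF g (envC X Y T G) [seq (x, [:: val i]) | i <- ords, x <- [:: (1%:Z, [:: val i])]].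
Proof. by apply: link1 => i; rewrite sum1 interp1 envX. Qed.

Lemma L3 X Y T G : clif3 g T = evalF g (envC X Y T G)
  [seq (x, [:: val p.1.1; val p.1.2; val p.2]) | p <- Q3o,
      x <- [:: (1%:Z, [:: tc (val p.1.1) (val p.1.2) (val p.2)])]].
Proof. by apply: link3 => p _; rewrite sum1 interp1 envT ?ltn_ord // !inord_val. Qed.

Lemma C2 X T : alternating3 T ->
  clif_vec g X *m clif3 g T + clif3 g T *m clif_vec g X = (-2) *: clif2 g (contract X T).
Proof.
move=> hT.
pose env := envC X X T (fun _ _ _ _ => 0).
have LC : clif2 g (contract X T) = evalF g env
   [seq (x, [:: val p.1; val p.2]) | p <- Q2o,
      x <- [seq (1%:Z, [:: val i; tc (val i) (val p.1) (val p.2)]) | i <- ords]].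
  apply: link2 => p _; rewrite /contract sum_ord big_map; apply: eq_bigr => i _.
  by rewrite interp2 /env envX envT ?ltn_ord // !inord_val mul1r.
have -> : (-2 : R) = (-2)%:~R by [].
rewrite (LX X X T (fun _ _ _ _ => 0)) (L3 X X T (fun _ _ _ _ => 0)) LC -evalF_scale.
rewrite !evalF_mul -evalF_cat.
apply: (checkP hg (vn := vnT)).
- exact: henvT.
- by vm_compute.
- by vm_compute.
- by vm_compute.
Qed.

Lemma C3 X T :
  clif_vec g X *m clif3 g T - clif3 g T *m clif_vec g X = 2%:R *: clif4 g (wedge X T).
Proof.
pose env := envC X X T (fun _ _ _ _ => 0).
have LW : clif4 g (wedge X T) = evalF g env
   [seq (x, [:: val p.1.1.1; val p.1.1.2; val p.1.2; val p.2]) | p <- Q4o,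
      x <- [:: (1%:Z, [:: val p.1.1.1; tc (val p.1.1.2) (val p.1.2) (val p.2)]);
               (-1, [:: val p.1.1.2; tc (val p.1.1.1) (val p.1.2) (val p.2)]);
               (1%:Z, [:: val p.1.2; tc (val p.1.1.1) (val p.1.1.2) (val p.2)]);
               (-1, [:: val p.2; tc (val p.1.1.1) (val p.1.1.2) (val p.1.2)])]].
  apply: link4 => p _; rewrite !big_cons big_nil !interp2 /env !envX !envT ?ltn_ord //.
  rewrite !inord_val /wedge; ring.
have -> : (2%:R : R) = (2%:Z)%:~R by [].
have -> : forall M : 'M[R]_16, - M = (-1)%:~R *: M by move=> M; rewrite scaleN1r.
rewrite (LX X X T (fun _ _ _ _ => 0)) (L3 X X T (fun _ _ _ _ => 0)) LW -!evalF_scale.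
rewrite !evalF_mul -evalF_scale -evalF_cat.
apply: (checkP hg (vn := vid)).
- exact: henv_id.
- by vm_compute.
- by vm_compute.
- by vm_compute.
Qed.

Lemma C4 G : clif4 g (hodge G) = cvol g *m clif4 g G.
Proof.
pose env := envC (fun _ => 0) (fun _ => 0) (fun _ _ _ => 0) G.
have LH : clif4 g (hodge G) = evalF g env
   [seq (x, [:: val p.1.1.1; val p.1.1.2; val p.1.2; val p.2]) | p <- Q4o,
      x <- [:: ((hsN (val p.1.1.1) (val p.1.1.2) (val p.1.2) (val p.2)).1,
                [:: gc (nth 0 (hsN (val p.1.1.1) (val p.1.1.2) (val p.1.2) (val p.2)).2 0)
                       (nth 0 (hsN (val p.1.1.1) (val p.1.1.2) (val p.1.2) (val p.2)).2 1)
                       (nth 0 (hsN (val p.1.1.1) (val p.1.1.2) (val p.1.2) (val p.2)).2 2)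
                       (nth 0 (hsN (val p.1.1.1) (val p.1.1.2) (val p.1.2) (val p.2)).2 3)])]].
  apply: link4 => p _; rewrite sum1 /interp big_cons big_nil mulr1 /env envG ?nth_lt8 ?hsN_lt //.
have LG : clif4 g G = evalF g env
   [seq (x, [:: val p.1.1.1; val p.1.1.2; val p.1.2; val p.2]) | p <- Q4o,
      x <- [:: (1%:Z, [:: gc (val p.1.1.1) (val p.1.1.2) (val p.1.2) (val p.2)])]].
  by apply: link4 => p _; rewrite sum1 interp1 /env envG ?ltn_ord // !inord_val.
rewrite LH LG (linkvol g env) evalF_mul.
apply: (checkP hg (vn := vid)).
- exact: henv_id.
- by vm_compute.
- by vm_compute.
- by vm_compute.
Qed.

Lemma C5 X T : cvol g *m clif_vec g X = - (clif_vec g X *m cvol g) /\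
  cvol g *m clif3 g T = - (clif3 g T *m cvol g).
Proof.
pose env := envC X X T (fun _ _ _ _ => 0).
have E : forall M : 'M[R]_16, - M = (-1)%:~R *: M by move=> M; rewrite scaleN1r.
rewrite (LX X X T (fun _ _ _ _ => 0)) (L3 X X T (fun _ _ _ _ => 0)) (linkvol g env).
split; rewrite E !evalF_mul -!evalF_scale.
- apply: (checkP hg (vn := vid)); [exact: henv_id | by vm_compute | by vm_compute | by vm_compute].
- apply: (checkP hg (vn := vid)); [exact: henv_id | by vm_compute | by vm_compute | by vm_compute].
Qed.

End Idents.

Section Deriv.
Variable R : realType.
Variable g : 'I_8 -> 'M[R]_16.
Hypothesis hg : is_clifford_rep g.

Lemma clif4_lin (a b : R) F1 F2 :
  clif4 g (fun i j k l => a * F1 i j k l + b * F2 i j k l) = a *: clif4 g F1 + b *: clif4 g F2.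
Proof.
rewrite !E4 !scaler_sumr -big_split /=; apply: eq_bigr => p _.
by rewrite scalerDl !scalerA.
Qed.

Lemma clif2_0 B : (forall i j, B i j = 0) -> clif2 g B = 0.
Proof. by move=> h; rewrite E2 big1 // => p _; rewrite h scale0r. Qed.

Definition lam (n2 : R) : R := (1 - n2^-1) / 16.
Definition mu (n2 : R) : R := - (1 + n2^-1) / 16.

Definition Fof (xi : vec8 R) (T : form3 R) : form4 R :=
  fun i j k l => lam (\sum_(a < 8) xi a * xi a) * wedge xi T i j k l
               + mu (\sum_(a < 8) xi a * xi a) * hodge (wedge xi T) i j k l.

Lemma deriv (Psip : 'cV[R]_16) (xi : vec8 R) (T : form3 R) :
  cvol g *m Psip = Psip -> alternating3 T ->
  (forall j k, contract xi T j k = 0) -> clif3 g T *m Psip = 0 ->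
  \sum_(a < 8) xi a * xi a != 0 ->
  solves g (Psip + clif_vec g xi *m Psip) T (Fof xi T).
Proof.
move=> hp hT hc hc3 hn X.
set n2 := \sum_(a < 8) xi a * xi a.
set x := clif_vec g X; set z := clif_vec g xi; set c := clif3 g T; set v := cvol g.
have c2E : clif2 g (contract X T) = (-2)^-1 *: (x *m c + c *m x).
  have h2 : (-2 : R) != 0 by rewrite oppr_eq0 pnatr_eq0.
  by rewrite (C2 hg) // scalerA mulVf // scale1r.
have cz : c *m z = - (z *m c).
  have := C2 hg xi hT; rewrite (clif2_0 hc) scaler0 => /eqP; rewrite addr_eq0 => /eqP.
  by rewrite -/z -/c => ->; rewrite opprK.
have zz : z *m z = - n2 *: 1%:M.
  have := C1 hg xi xi; rewrite -/z -/n2 => /(congr1 (fun M => 2^-1 *: M)).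
  rewrite -mulr2n -scaler_nat scalerA mulVf ?pnatr_eq0 // scale1r scalerA => ->.
  by congr (_ *: _); field.
have xz : x *m z = - (z *m x) - (2 * \sum_(a < 8) X a * xi a) *: 1%:M.
  have h := C1 hg X xi; rewrite -/x -/z in h.
  by rewrite -[x *m z](addrK (z *m x)) h mulNr scaleNr addrC.
have vx : v *m x = - (x *m v) by case: (C5 hg X T).
have vz : v *m z = - (z *m v) by case: (C5 hg xi T).
have vc : v *m c = - (c *m v) by case: (C5 hg X T).
have c4w : clif4 g (wedge xi T) = z *m c.
  have h := C3 hg xi T; rewrite -/z -/c cz opprK in h.
  have : (2%:R : R) *: clif4 g (wedge xi T) = 2%:R *: (z *m c) by rewrite -h scaler_nat mulr2n.
  move/(congr1 (fun M => 2^-1 *: M)).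
  by rewrite !scalerA mulVf ?pnatr_eq0 // !scale1r.
have c4F : clif4 g (Fof xi T) = lam n2 *: (z *m c) + mu n2 *: (v *m (z *m c)).
  rewrite /Fof (clif4_lin _ _ (wedge xi T) (hodge (wedge xi T))) (C4 hg).
  by rewrite c4w.
set k := 2 * \sum_(a < 8) X a * xi a in xz.
set A := c *m (x *m Psip).
have P1 : (x *m c + c *m x) *m Psip = A.
  by rewrite mulmxDl -!mulmxA hc3 mulmx0 add0r.
have cxz : c *m (x *m (z *m Psip)) = z *m A.
  rewrite [x *m (z *m Psip)]mulmxA xz mulmxBl mulNmx -scalemxAl mul1mx.
  rewrite mulmxBr mulmxN -scalemxAr hc3 scaler0 subr0 -!mulmxA.
  by rewrite [c *m (z *m _)]mulmxA cz mulNmx opprK -mulmxA.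
have P2 : (x *m c + c *m x) *m (z *m Psip) = z *m A.
  rewrite mulmxDl -!mulmxA cxz [c *m (z *m Psip)]mulmxA cz mulNmx -mulmxA hc3.
  by rewrite mulmx0 oppr0 mulmx0 add0r.
have P3 : (lam n2 *: (z *m c) + mu n2 *: (v *m (z *m c))) *m (x *m Psip)
    = (lam n2 - mu n2) *: (z *m A).
  rewrite mulmxDl -!scalemxAl -!mulmxA.
  have -> : v *m (z *m A) = - (z *m A).
    rewrite /A mulmxA vz mulNmx -mulmxA [v *m (c *m _)]mulmxA vc mulNmx -mulmxA.
    rewrite [v *m (x *m _)]mulmxA vx mulNmx -mulmxA hp.
    by rewrite !mulmxN !opprK.
  by rewrite scalerN scalerBl.
have P4 : (lam n2 *: (z *m c) + mu n2 *: (v *m (z *m c))) *m (x *m (z *m Psip))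
    = (- (lam n2 + mu n2) * n2) *: A.
  rewrite mulmxDl -!scalemxAl -!mulmxA cxz.
  have zzA : z *m (z *m A) = - n2 *: A by rewrite mulmxA zz -scalemxAl mul1mx.
  have -> : v *m (z *m (z *m A)) = z *m (z *m A).
    rewrite zzA -scalemxAr /A.
    rewrite [v *m (c *m _)]mulmxA vc mulNmx -mulmxA [v *m (x *m _)]mulmxA vx mulNmx -mulmxA hp.
    by rewrite !mulmxN opprK.
  by rewrite zzA !scalerA -scalerDl; congr (_ *: _); ring.
rewrite c2E c4F -scalemxAl !mulmxDr P1 P2 P3 P4 scalerA.
have eA : 1 / 4 * (-2)^-1 + (- (lam n2 + mu n2) * n2) = 0.
  by rewrite /lam /mu; field.
have eB : 1 / 4 * (-2)^-1 + (lam n2 - mu n2) = 0.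
  by rewrite /lam /mu; field.
have gen (a b d : R) (M N : 'cV[R]_16) :
    a *: (M + N) + (b *: N + d *: M) = (a + d) *: M + (a + b) *: N.
  by apply/matrixP => i j; rewrite !mxE; ring.
by rewrite gen eA eB !scale0r addr0.
Qed.

End Deriv.

Definition hs_ok : bool :=
  all (fun i => all (fun j => all (fun k => all (fun l =>
    let h := hsN i j k l in
    (hsN j i k l == (- h.1, h.2)) && (hsN i k j l == (- h.1, h.2)) && (hsN i j l k == (- h.1, h.2)))
  (iota 0 8)) (iota 0 8)) (iota 0 8)) (iota 0 8).

Lemma hs_okT : hs_ok.
Proof. by vm_compute. Qed.

Lemma hsN_swap (i j k l : 'I_8) :
  let h := hsN i j k l in
  [/\ hsN j i k l = (- h.1, h.2), hsN i k j l = (- h.1, h.2) & hsN i j l k = (- h.1, h.2)].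
Proof.
have := hs_okT; rewrite /hs_ok.
have mi (a : 'I_8) : (val a \in iota 0 8) by rewrite mem_iota ltn_ord.
move=> /allP /(_ _ (mi i)) /allP /(_ _ (mi j)) /allP /(_ _ (mi k)) /allP /(_ _ (mi l)).
by case/andP => /andP [/eqP -> /eqP ->] /eqP ->.
Qed.

Section Alt.
Variable R : realType.

Lemma hodge_alt (G : form4 R) : alternating4 (hodge G).
Proof.
move=> i j k l; rewrite /hodge.
case: (hsN_swap i j k l) => -> -> ->.
by split; rewrite /= intrN mulNr.
Qed.

Lemma wedge_alt (X : vec8 R) (T : form3 R) : alternating3 T -> alternating4 (wedge X T).
Proof.
move=> hT i j k l.
have A1 a b c : T b a c = - T a b c by case: (hT a b c).
have A2 a b c : T a c b = - T a b c by case: (hT a b c).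
rewrite /wedge; split.
- by rewrite (A1 i j l) (A1 i j k); ring.
- by rewrite (A1 j k l) (A2 i j k); ring.
- by rewrite (A2 j k l) (A2 i k l); ring.
Qed.

Lemma Fof_alt (xi : vec8 R) (T : form3 R) : alternating3 T -> alternating4 (Fof xi T).
Proof.
move=> hT i j k l.
case: (wedge_alt xi hT i j k l) => w1 w2 w3.
case: (hodge_alt (wedge xi T) i j k l) => h1 h2 h3.
by rewrite /Fof; split; rewrite ?w1 ?w2 ?w3 ?h1 ?h2 ?h3; ring.
Qed.

End Alt.

Section Onto.
Variable R : realType.
Variable g : 'I_8 -> 'M[R]_16.
Hypothesis hg : is_clifford_rep g.
Variable Psip : 'cV[R]_16.
Hypothesis hp : cvol g *m Psip = Psip.
Hypothesis hp0 : Psip != 0.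

Definition Bp : 'M[R]_(8, 16) := \matrix_(i < 8, r < 16) (g i *m Psip) r 0.
Definition Bq : 'M[R]_(8, 16) := \matrix_(i < 8, r < 16) (g ord0 *m (g i *m Psip)) r 0.
Definition vecOf (u : 'rV[R]_8) : vec8 R := fun i => u 0 i.

Lemma BpE u : (u *m Bp)^T = clif_vec g (vecOf u) *m Psip.
Proof.
rewrite /clif_vec mulmx_suml; apply/matrixP => r s; rewrite (ord1 s) summxE !mxE.
by apply: eq_bigr => i _; rewrite -scalemxAl [in RHS]mxE !mxE.
Qed.

Lemma BqE u : (u *m Bq)^T = g ord0 *m (clif_vec g (vecOf u) *m Psip).
Proof.
rewrite /clif_vec mulmx_suml mulmx_sumr; apply/matrixP => r s; rewrite (ord1 s) summxE !mxE.
by apply: eq_bigr => i _; rewrite -scalemxAl -scalemxAr [in RHS]mxE !mxE.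
Qed.

Lemma gE i : g i = clif_vec g (fun j => (j == i)%:R).
Proof.
rewrite /clif_vec (bigD1 i) //= eqxx scale1r big1 ?addr0 //.
by move=> j /negbTE ->; rewrite scale0r.
Qed.

Lemma volcv X : cvol g *m (clif_vec g X *m Psip) = - (clif_vec g X *m Psip).
Proof.
case: (C5 hg X (fun _ _ _ => 0)) => h _.
by rewrite mulmxA h mulNmx -mulmxA hp.
Qed.

Lemma volg0 (w : 'cV[R]_16) : cvol g *m (g ord0 *m w) = - (g ord0 *m (cvol g *m w)).
Proof.
case: (C5 hg (fun j => (j == ord0)%:R) (fun _ _ _ => 0)) => h _.
by rewrite gE mulmxA h mulNmx !mulmxA.
Qed.

Lemma cv_inj X : clif_vec g X *m Psip = 0 -> forall i, X i = 0.
Proof.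
move=> h0.
have h := C1 hg X X.
have hh : (2%:R : R) *: (clif_vec g X *m clif_vec g X) = (-2 * \sum_(i < 8) X i * X i) *: 1%:M.
  by rewrite -h scaler_nat mulr2n.
have e : (clif_vec g X *m clif_vec g X) = (- \sum_(i < 8) X i * X i) *: 1%:M.
  have := congr1 (fun M => 2^-1 *: M) hh; rewrite !scalerA mulVf ?pnatr_eq0 // scale1r => ->.
  by congr (_ *: _); field.
have : (- \sum_(i < 8) X i * X i) *: Psip = 0.
  by rewrite -mul_scalar_mx -scalemx1 -e -mulmxA h0 mulmx0.
move/eqP; rewrite scaler_eq0 (negbTE hp0) orbF oppr_eq0 => hs.
have pos : forall i : 'I_8, true -> 0 <= X i * X i by move=> i _; rewrite -expr2 sqr_ge0.
move/eqP: hs => hs; have H := psumr_eq0P pos hs => i.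
by have := H i isT; move/eqP; rewrite mulf_eq0 orbb => /eqP.
Qed.

Lemma g0K (w : 'cV[R]_16) : g ord0 *m (g ord0 *m w) = - w.
Proof. by rewrite mulmxA gg // mulNmx mul1mx. Qed.

Lemma chir (a b : 'cV[R]_16) :
  cvol g *m a = - a -> cvol g *m b = - b ->
  cvol g *m (a + g ord0 *m b) = - (a + g ord0 *m b) -> g ord0 *m b = 0.
Proof.
move=> ha hb.
rewrite mulmxDr ha volg0 hb mulmxN opprK opprD => /addrI /eqP.
rewrite -addr_eq0 -mulr2n => /eqP h2.
have := congr1 (fun M => 2^-1 *: M) h2.
by rewrite scaler0 -scaler_nat scalerA mulVf ?pnatr_eq0 // scale1r.
Qed.

Lemma vecOf0 (u : 'rV[R]_8) : (forall i, vecOf u i = 0) -> u = 0.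
Proof. by move=> h; apply/matrixP => a i; rewrite (ord1 a) mxE -[u 0 i]/(vecOf u i) h. Qed.

Lemma Mfree : row_free (col_mx Bp Bq).
Proof.
apply: inj_row_free => w hw.
rewrite -(hsubmxK w) mul_row_col in hw.
have h := congr1 trmx hw; rewrite trmx0 linearD /= BpE BqE in h.
have hb : g ord0 *m (clif_vec g (vecOf (rsubmx w)) *m Psip) = 0.
  apply: (@chir (clif_vec g (vecOf (lsubmx w)) *m Psip)).
  - exact: volcv.
  - exact: volcv.
  - by rewrite h mulmx0 oppr0.
have b0 : clif_vec g (vecOf (rsubmx w)) *m Psip = 0.
  by have := congr1 (mulmx (g ord0)) hb; rewrite g0K mulmx0 => /eqP; rewrite oppr_eq0 => /eqP.
have a0 : clif_vec g (vecOf (lsubmx w)) *m Psip = 0 by rewrite -h hb addr0.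
rewrite -(hsubmxK w) (vecOf0 (cv_inj a0)) (vecOf0 (cv_inj b0)).
by rewrite row_mx0.
Qed.

Lemma onto (v : 'cV[R]_16) : cvol g *m v = - v -> exists X, clif_vec g X *m Psip = v.
Proof.
move=> hv.
have U : (col_mx Bp Bq : 'M_16) \in unitmx by rewrite -row_free_unit Mfree.
pose w : 'rV[R]_(8 + 8) := v^T *m invmx (col_mx Bp Bq : 'M_16).
have hw : w *m (col_mx Bp Bq : 'M_16) = v^T by rewrite mulmxKV.
rewrite -(hsubmxK w) mul_row_col in hw.
have h := congr1 trmx hw; rewrite trmxK linearD /= BpE BqE in h.
exists (vecOf (lsubmx w)).
have hb : g ord0 *m (clif_vec g (vecOf (rsubmx w)) *m Psip) = 0.
  apply: (@chir (clif_vec g (vecOf (lsubmx w)) *m Psip)).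
  - exact: volcv.
  - exact: volcv.
  - by rewrite h.
by rewrite -h hb addr0.
Qed.

End Onto.

Definition Q7n : seq (nat * nat * nat) :=
  [seq (p, c) | p <- [seq (a, b) | a <- iota 0 7, b <- [seq b <- iota 0 7 | (a < b)%N]],
                c <- [seq c <- iota 0 7 | (p.2 < c)%N]].

Definition a7_ok : bool :=
  all (fun a => all (fun b => all (fun c =>
    let s := sort3 a b c in let s1 := sort3 b a c in let s2 := sort3 a c b in
    [&& s1.1 == - s.1, s2.1 == - s.1 & (s.1 == 0) || ((s1.2 == s.2) && (s2.2 == s.2))])
  (iota 0 7)) (iota 0 7)) (iota 0 7).

Definition q7_ok : bool :=
  all (fun n => let q := nth (0, 0, 0)%N Q7n n in
    [&& sort3 q.1.1 q.1.2 q.2 == (1, q), index q Q7n == n, (q.1.1 < 7)%N, (q.1.2 < 7)%N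
      & (q.2 < 7)%N]) (iota 0 35).

Lemma a7_okT : a7_ok. Proof. by vm_compute. Qed.
Lemma q7_okT : q7_ok. Proof. by vm_compute. Qed.

Section J.
Variable R : realType.
Variable xi : vec8 R.
Variable m : 'I_8.
Hypothesis hm : xi m != 0.

Definition ix (s : nat * nat * nat) : 'I_35 := inord (index s Q7n).
Definition alt7 (t : 'rV[R]_35) (a b c : 'I_7) : R :=
  (sort3 a b c).1%:~R * t 0 (ix (sort3 a b c).2).

Lemma key7 (t : 'rV[R]_35) (s1 s : int * (nat * nat * nat)) : s1.1 = - s.1 -> (s.1 == 0) || (s1.2 == s.2) ->
  s1.1%:~R * t 0 (ix s1.2) = - (s.1%:~R * t 0 (ix s.2)).
Proof.
case: s1 => [x1 q1]; case: s => [x q] /= ->.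
case/orP => [/eqP -> | /eqP ->]; last by rewrite intrN mulNr.
by rewrite oppr0 mulr0z mul0r mul0r oppr0.
Qed.

Lemma alt7_alt t a b c : alt7 t b a c = - alt7 t a b c /\ alt7 t a c b = - alt7 t a b c.
Proof.
have := a7_okT; rewrite /a7_ok.
have mi (x : 'I_7) : (val x \in iota 0 7) by rewrite mem_iota ltn_ord.
move=> /allP /(_ _ (mi a)) /allP /(_ _ (mi b)) /allP /(_ _ (mi c)) /and3P [/eqP e1 /eqP e2 h].
split; apply: key7 => //.
- by case/orP: h => [-> // | /andP [-> _]]; rewrite orbT.
- by case/orP: h => [-> // | /andP [_ ->]]; rewrite orbT.
Qed.

Lemma alt7_at t (n : 'I_35) :
  alt7 t (inord (nth (0, 0, 0)%N Q7n n).1.1) (inord (nth (0, 0, 0)%N Q7n n).1.2)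
         (inord (nth (0, 0, 0)%N Q7n n).2) = t 0 n.
Proof.
have := q7_okT; rewrite /q7_ok.
move=> /allP /(_ (val n)); rewrite mem_iota ltn_ord => /(_ isT).
move=> /and5P [/eqP e1 /eqP e2 h1 h2 h3].
by rewrite /alt7 !inordK // e1 /ix e2 inord_val mul1r.
Qed.

Lemma alt7_lin (a : R) t s x y z : alt7 (a *: t + s) x y z = a * alt7 t x y z + alt7 s x y z.
Proof. by rewrite /alt7; move: (sort3 _ _ _) => q; rewrite !mxE mulrDr mulrA [_ * a]mulrC mulrA. Qed.

Definition U (t : 'rV[R]_35) (i j k : 'I_8) : R :=
  match unlift m i, unlift m j, unlift m k with
  | Some a, Some b, Some c => alt7 t a b c
  | _, _, _ => 0
  end.

Lemma U_alt t : alternating3 (U t).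
Proof.
move=> i j k; rewrite /U.
case: (unlift m i) => [a|]; case: (unlift m j) => [b|]; case: (unlift m k) => [c|];
  rewrite ?oppr0 //.
exact: alt7_alt.
Qed.

Lemma U_lin (a : R) t s i j k : U (a *: t + s) i j k = a * U t i j k + U s i j k.
Proof.
rewrite /U; case: (unlift m i) => [x|]; case: (unlift m j) => [y|];
  case: (unlift m k) => [z|]; rewrite ?alt7_lin //; ring.
Qed.

Definition Cn t := contract xi (U t).
Definition dl (i : 'I_8) : R := (i == m)%:R.

Definition J (t : 'rV[R]_35) : form3 R := fun i j k =>
  U t i j k - (xi m)^-1 * (dl i * Cn t j k - dl j * Cn t i k + dl k * Cn t i j).

Lemma Cn_alt t j k : Cn t k j = - Cn t j k.
Proof.
rewrite /Cn /contract -sumrN; apply: eq_bigr => i _.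
by case: (U_alt t i j k) => _ ->; rewrite mulrN.
Qed.

Lemma J_alt t : alternating3 (J t).
Proof.
move=> i j k; have [u1 u2] := U_alt t i j k.
rewrite /J u1 u2 (Cn_alt t i j) (Cn_alt t j k).
by split; ring.
Qed.

Lemma J_lin (a : R) t s i j k : J (a *: t + s) i j k = a * J t i j k + J s i j k.
Proof.
have CL x y : Cn (a *: t + s) x y = a * Cn t x y + Cn s x y.
  rewrite /Cn /contract mulr_sumr -big_split; apply: eq_bigr => l _.
  by rewrite U_lin /=; ring.
by rewrite /J U_lin !CL; ring.
Qed.

Lemma J_lift t a b c : J t (lift m a) (lift m b) (lift m c) = alt7 t a b c.
Proof.
have d0 x : dl (lift m x) = 0 by rewrite /dl eq_sym (negbTE (neq_lift m x)).
by rewrite /J !d0 /U !liftK !mul0r !subrr addr0 mulr0 subr0.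
Qed.

Lemma J_contract t j k : contract xi (J t) j k = 0.
Proof.
have S0 l : \sum_(i < 8) xi i * Cn t i l = 0.
  set S := LHS.
  have : S = - S.
    rewrite {1}/S /Cn /contract.
    under eq_bigr do rewrite mulr_sumr.
    rewrite exchange_big /S -sumrN; apply: eq_bigr => a _.
    rewrite /Cn /contract mulr_sumr -sumrN; apply: eq_bigr => b _ /=.
    by case: (U_alt t b a l) => -> _; ring.
  by lra.
have Sd (f : R) : \sum_(i < 8) xi i * (dl i * f) = xi m * f.
  rewrite (bigD1 m) //= /dl eqxx mul1r big1 ?addr0 // => i /negbTE ->.
  by rewrite mul0r mulr0.
rewrite /contract /J.
have -> : \sum_(i < 8) xi i * (U t i j k - (xi m)^-1 *
      (dl i * Cn t j k - dl j * Cn t i k + dl k * Cn t i j)) =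
    \sum_(i < 8) xi i * U t i j k - (xi m)^-1 * (\sum_(i < 8) xi i * (dl i * Cn t j k))
    + (xi m)^-1 * dl j * (\sum_(i < 8) xi i * Cn t i k)
    - (xi m)^-1 * dl k * (\sum_(i < 8) xi i * Cn t i j).
  rewrite !mulr_sumr -!sumrN -!big_split /=; apply: eq_bigr => i _ /=; ring.
rewrite !S0 Sd -/(contract xi (U t) j k) -/(Cn t j k).
by rewrite mulrA mulVf //; ring.
Qed.

End J.

Section Count.
Variable R : realType.
Variable g : 'I_8 -> 'M[R]_16.

Lemma clif3_ext (T T' : form3 R) : (forall i j k, T i j k = T' i j k) -> clif3 g T = clif3 g T'.
Proof. by move=> h; rewrite !E3; apply: eq_bigr => p _; rewrite h. Qed.

Lemma clif3_sum (c : 'I_35 -> R) (Tn : 'I_35 -> form3 R) :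
  clif3 g (fun i j k => \sum_(n < 35) c n * Tn n i j k) = \sum_(n < 35) c n *: clif3 g (Tn n).
Proof.
rewrite E3.
under eq_bigr do rewrite scaler_suml.
rewrite exchange_big; apply: eq_bigr => n _.
by rewrite E3 scaler_sumr; apply: eq_bigr => p _; rewrite scalerA.
Qed.

Lemma lin_sum (f : 'rV[R]_35 -> R) : (forall a x y, f (a *: x + y) = a * f x + f y) ->
  forall t, f t = \sum_(n < 35) t 0 n * f (delta_mx 0 n).
Proof.
move=> hf t.
have f0 : f 0 = 0 by have := hf 1 0 0; rewrite scale1r addr0 mul1r => h; lra.
have fD x y : f (x + y) = f x + f y by have := hf 1 x y; rewrite scale1r mul1r.
have fZ a x : f (a *: x) = a * f x by have := hf a x 0; rewrite addr0 f0 addr0.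
rewrite {1}(row_sum_delta t) (big_morph f fD f0); apply: eq_bigr => n _.
by rewrite fZ.
Qed.

End Count.

Lemma Fof_lin (R : realType) (xi : vec8 R) (T1 T2 T3 : form3 R) (a : R) :
  (forall i j k, T3 i j k = a * T1 i j k + T2 i j k) ->
  forall i j k l, Fof xi T3 i j k l = a * Fof xi T1 i j k l + Fof xi T2 i j k l.
Proof.
move=> hT i j k l; rewrite /Fof /hodge.
move: (hsN _ _ _ _) => h.
move: (lam _) (mu _) (h.1%:~R : R) => c1 c2 c3.
by rewrite /wedge !hT; ring.
Qed.

Unset Implicit Arguments. Set Strict Implicit. Set Printing Implicit Defensive.

Theorem mainTheorem6 (R : realType) (g : 'I_8 -> 'M[R]_16)
  (hg : is_clifford_rep g) (Psip Psim : 'cV[R]_16)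
  (hp : cvol g *m Psip = Psip) (hm : cvol g *m Psim = - Psim)
  (hp0 : Psip != 0) (hm0 : Psim != 0) :
  exists P : 'rV[R]_25 -> form3 R * form4 R,
    [/\ forall (a : R) (u v : 'rV[R]_25) i j k,
          (P (a *: u + v)).1 i j k = a * (P u).1 i j k + (P v).1 i j k,
        forall (a : R) (u v : 'rV[R]_25) i j k l,
          (P (a *: u + v)).2 i j k l = a * (P u).2 i j k l + (P v).2 i j k l,
        injective P
      & forall u : 'rV[R]_25,
          [/\ alternating3 (P u).1, alternating4 (P u).2
            & solves g (Psip + Psim) (P u).1 (P u).2]].
Proof.
have [xi hxi] := onto hg hp hp0 hm.
have [m hmx] : exists m, xi m != 0.
  case: (pickP (fun i => xi i != 0)) => [m hmx|h]; first by exists m.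
  exfalso; move/negP: hm0; apply; apply/eqP.
  rewrite -hxi /clif_vec big1 ?mul0mx // => i _.
  by have := h i; move/negbFE/eqP => ->; rewrite scale0r.
have hn2 : \sum_(a < 8) xi a * xi a != 0.
  apply/negP => /eqP hs.
  have pos : forall i : 'I_8, true -> 0 <= xi i * xi i by move=> i _; rewrite -expr2 sqr_ge0.
  have H := psumr_eq0P pos hs.
  have := H m isT; move/eqP; rewrite mulf_eq0 orbb.
  by rewrite (negbTE hmx).
pose Phi : 'M[R]_(35, 16) := \matrix_(n < 35, r < 16) (clif3 g (J xi m (delta_mx 0 n)) *m Psip) r 0.
have PhiE t : (t *m Phi)^T = clif3 g (J xi m t) *m Psip.
  rewrite (@clif3_ext _ _ _ (fun i j k => \sum_(n < 35) t 0 n * J xi m (delta_mx 0 n) i j k));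
    last by move=> i j k; apply: (lin_sum (f := fun t => J xi m t i j k)) => a x y; exact: J_lin.
  rewrite clif3_sum mulmx_suml; apply/matrixP => r s; rewrite (ord1 s) !mxE summxE.
  by apply: eq_bigr => n _; rewrite -scalemxAl !mxE.
have Phi_sub : (Phi <= Bp g Psip)%MS.
  apply/row_subP => n.
  have hrow : row n Phi = (clif3 g (J xi m (delta_mx 0 n)) *m Psip)^T.
    by apply/matrixP => a r; rewrite !mxE (ord1 a).
  set T := J xi m (delta_mx 0 n) in hrow.
  have hv : cvol g *m (clif3 g T *m Psip) = - (clif3 g T *m Psip).
    by case: (C5 hg (fun _ => 0) T) => _ h; rewrite mulmxA h mulNmx -mulmxA hp.
  have [X hX] := onto hg hp hp0 hv.
  rewrite hrow -hX.
  have -> : clif_vec g X = clif_vec g (vecOf (\row_i X i)).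
    by rewrite /clif_vec /vecOf; apply: eq_bigr => i _; rewrite mxE.
  by rewrite -BpE trmxK submxMl.
have rk : (\rank Phi <= 8)%N by rewrite (leq_trans (mxrankS Phi_sub)) // rank_leq_row.
set K := kermx Phi.
have h25 : (25 <= \rank K)%N by rewrite mxrank_ker; lia.
pose S25 : 'M[R]_(25, \rank K) := \matrix_(i < 25, j < \rank K) ((widen_ord h25 i == j)%:R).
have SS : S25 *m S25^T = 1%:M.
  apply/matrixP => i i'; rewrite !mxE (bigD1 (widen_ord h25 i)) //= !mxE eqxx mul1r.
  rewrite big1 ?addr0; last first.
    by move=> j /negbTE hj; rewrite !mxE eq_sym hj mul0r.
  by congr (_%:R); rewrite -val_eqE /= val_eqE eq_sym.
pose B25 := S25 *m row_base K.
have Bfree : row_free B25.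
  apply: inj_row_free => u hu.
  have : u *m S25 == 0 by rewrite -(mulmx_free_eq0 _ (row_base_free K)) -mulmxA hu.
  move/eqP => h0.
  by rewrite -[u]mulmx1 -SS mulmxA h0 mul0mx.
have Bsub (u : 'rV[R]_25) : (u *m B25 <= K)%MS.
  by rewrite /B25 mulmxA (submx_trans (submxMl _ _)) // eq_row_base.
have hc3 (u : 'rV[R]_25) : clif3 g (J xi m (u *m B25)) *m Psip = 0.
  rewrite -PhiE; move/sub_kermxP: (Bsub u) => ->; by rewrite trmx0.
exists (fun u => (J xi m (u *m B25), Fof xi (J xi m (u *m B25)))); split.
- by move=> a u v i j k /=; rewrite mulmxDl -scalemxAl J_lin.
- move=> a u v i j k l /=; apply: Fof_lin => i' j' k'.
  by rewrite mulmxDl -scalemxAl J_lin.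
- move=> u v /(congr1 fst) /= E.
  have Et : u *m B25 = v *m B25.
    apply/matrixP => a n; rewrite (ord1 a) -alt7_at -(J_lift xi m).
    by rewrite E (J_lift xi m) alt7_at.
  apply/eqP; rewrite -subr_eq0 -(mulmx_free_eq0 _ Bfree) mulmxBl Et subrr //.
- move=> u /=; split.
  + exact: J_alt.
  + exact/Fof_alt/J_alt.
  + rewrite -hxi; apply: deriv => //; [exact: J_alt | exact: J_contract].
Qed.
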